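(* Let $A=(a_{ij})\in M(m,\mathbb{C})$ be invertible and let $X_A$ be a complex algebra spanned by elements $\{x_{ij}:i,j=1,\ldots,m\}$ (not assumed linearly independent) satisfying $x_{ij}x_{kl}=a_{jk}x_{il}$. Then either $X_A=\{0\}$, or $X_A\neq\{0\}$, in which case $X_A$ is isomorphic to the matrix algebra $M(m,\mathbb{C})$, the elements $x_{ij}$ are linearly independent (in particular all nonzero) and form a basis of $X_A$, and the unit of $X_A$ is $\mathbb{1}=\sum_{i,j=1}^m (A^{-1})_{ij}\,x_{ij}$. *)

(* Defs.v *)
From HB Require Import structures.
From mathcomp Require Import all_boot all_order all_algebra.
From mathcomp Require Import complex.
From mathcomp Require Import reals.
Set Implicit Arguments. Unset Strict Implicit. Unset Printing Implicit Defensive.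
Import Order.TTheory GRing.Theory Num.Theory.
Local Open Scope ring_scope.

Definition Cplx (R : realType) : Type := complex R.

Definition is_assoc_algebra (K : fieldType) (V : lmodType K) (mul : V -> V -> V) : Prop :=
  [/\ forall (a : K) (u v w : V), mul (a *: u + v) w = a *: mul u w + mul v w,
      forall (a : K) (u v w : V), mul u (a *: v + w) = a *: mul u v + mul u w
    & forall u v w : V, mul u (mul v w) = mul (mul u v) w].

Definition algebra_iso_to_matrix (K : fieldType) (V : lmodType K) (mul : V -> V -> V)
  (m : nat) (f : V -> 'M[K]_m) : Prop :=
  [/\ forall (a : K) (u v : V), f (a *: u + v) = a *: f u + f v,
      forall u v : V, f (mul u v) = f u *m f v
    & bijective f].

(* Main.v *)
Require Import Defs.
From HB Require Import structures.
From mathcomp Require Import all_boot all_order all_algebra.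
From mathcomp Require Import complex reals.
Import Order.TTheory GRing.Theory Num.Theory.
Local Open Scope ring_scope.
Lemma delta_mid (K : pzRingType) (m : nat) (B : 'M[K]_m) (p q r s : 'I_m) :
  delta_mx p q *m B *m delta_mx r s = B q r *: delta_mx p s.
Proof.
apply/matrixP => i j; rewrite !mxE.
rewrite (bigD1 r) //= big1 => [|k /negbTE kr]; last by rewrite !mxE kr mulr0.
rewrite !mxE eqxx /= addr0 (bigD1 q) //= big1 => [|k /negbTE kq]; last by rewrite !mxE kq andbF mul0r.
rewrite !mxE eqxx andbT addr0.
case: (i == p); case: (j == s); rewrite /= ?mulr1 ?mul1r ?mulr0 ?mul0r //.
Qed.

Section Alg.
Variables (K : fieldType) (m : nat) (A : 'M[K]_m) (X : lmodType K)
  (mul : X -> X -> X).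
Hypothesis hX : [/\ forall (a : K) (u v w : X), mul (a *: u + v) w = a *: mul u w + mul v w,
      forall (a : K) (u v w : X), mul u (a *: v + w) = a *: mul u v + mul u w
    & forall u v w : X, mul u (mul v w) = mul (mul u v) w].
Variable x : 'I_m -> 'I_m -> X.
Hypothesis hrel : forall i j k l : 'I_m, mul (x i j) (x k l) = A j k *: x i l.

Definition S (M : 'M[K]_m) : X := \sum_(i < m) \sum_(j < m) M i j *: x i j.

Lemma mulDl u v w : mul (u + v) w = mul u w + mul v w.
Proof. by case: hX => h _ _; rewrite -{1}[u]scale1r h scale1r. Qed.
Lemma mulDr u v w : mul w (u + v) = mul w u + mul w v.
Proof. by case: hX => _ h _; rewrite -{1}[u]scale1r h scale1r. Qed.
Lemma mul0l w : mul 0 w = 0.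
Proof. by apply: (addrI (mul 0 w)); rewrite addr0 -mulDl addr0. Qed.
Lemma mul0r w : mul w 0 = 0.
Proof. by apply: (addrI (mul w 0)); rewrite addr0 -mulDr addr0. Qed.
Lemma mulZl a u w : mul (a *: u) w = a *: mul u w.
Proof. by case: hX => h _ _; rewrite -[a *: u]addr0 h mul0l addr0. Qed.
Lemma mulZr a u w : mul w (a *: u) = a *: mul w u.
Proof. by case: hX => _ h _; rewrite -[a *: u]addr0 h mul0r addr0. Qed.
Lemma mul_suml I (r : seq I) (P : pred I) (F : I -> X) w :
  mul (\sum_(i <- r | P i) F i) w = \sum_(i <- r | P i) mul (F i) w.
Proof. exact: (big_morph (fun u => mul u w) (fun u v => mulDl u v w) (mul0l w)). Qed.
Lemma mul_sumr I (r : seq I) (P : pred I) (F : I -> X) w :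
  mul w (\sum_(i <- r | P i) F i) = \sum_(i <- r | P i) mul w (F i).
Proof. exact: (big_morph (fun u => mul w u) (fun u v => mulDr u v w) (mul0r w)). Qed.

Lemma S_lin a M N : S (a *: M + N) = a *: S M + S N.
Proof.
rewrite /S scaler_sumr -big_split; apply: eq_bigr => i _.
rewrite scaler_sumr -big_split; apply: eq_bigr => j _.
by rewrite !mxE scalerDl scalerA.
Qed.
Lemma S0 : S 0 = 0.
Proof. by rewrite /S big1 // => i _; rewrite big1 // => j _; rewrite mxE scale0r. Qed.
Lemma SB M N : S (M - N) = S M - S N.
Proof.
rewrite /S -sumrB; apply: eq_bigr => i _; rewrite -sumrB; apply: eq_bigr => j _.
by rewrite !mxE scalerBl.
Qed.

Lemma S_delta p s : S (delta_mx p s) = x p s.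
Proof.
rewrite /S (bigD1 p) //= [X in _ + X]big1 => [|i /negbTE ip]; last first.
  by rewrite big1 // => j _; rewrite mxE ip scale0r.
rewrite addr0 (bigD1 s) //= [X in _ + X]big1 => [|j /negbTE js]; last by rewrite mxE js andbF scale0r.
by rewrite mxE !eqxx scale1r addr0.
Qed.

Lemma S_mul M N : mul (S M) (S N) = S (M *m A *m N).
Proof.
rewrite /S mul_suml; apply: eq_bigr => i _.
rewrite mul_suml.
under eq_bigr => j _ do rewrite mulZl mul_sumr.
under eq_bigr => j _ do under eq_bigr => k _ do rewrite mul_sumr.
under eq_bigr => j _ do under eq_bigr => k _ do under eq_bigr => l _ do rewrite mulZr hrel.
under [RHS]eq_bigr => l _ do rewrite !mxE scaler_suml.
under [RHS]eq_bigr => l _ do under eq_bigr => k _ do rewrite !mxE mulr_suml scaler_suml.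
rewrite exchange_big /=.
under [RHS]eq_bigr => k _ do rewrite exchange_big /=.
rewrite exchange_big /=.
apply: eq_bigr => j _; rewrite scaler_sumr; apply: eq_bigr => k _.
rewrite scaler_sumr; apply: eq_bigr => l _.
by rewrite !scalerA mulrAC.
Qed.

Lemma S_scale a M : S (a *: M) = a *: S M.
Proof. by have := S_lin a M 0; rewrite !addr0 S0 addr0. Qed.

Lemma S_fun (c : 'I_m -> 'I_m -> K) :
  S (\matrix_(i, j) c i j) = \sum_(i < m) \sum_(j < m) c i j *: x i j.
Proof. by apply: eq_bigr => i _; apply: eq_bigr => j _; rewrite mxE. Qed.

Hypothesis hA : A \in unitmx.

Lemma unit_l N : mul (S (invmx A)) (S N) = S N.
Proof. by rewrite S_mul mulVmx // mul1mx. Qed.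
Lemma unit_r N : mul (S N) (S (invmx A)) = S N.
Proof. by rewrite S_mul mulmxK. Qed.

Variables (p0 s0 : 'I_m).
Hypothesis hne : x p0 s0 != 0.

Lemma indep C : S C = 0 -> C = 0.
Proof.
move=> hC.
have hB : A *m C *m A = 0.
  apply/matrixP => q r; rewrite [RHS]mxE.
  have e : S (delta_mx p0 q *m A *m (C *m A *m delta_mx r s0)) = 0.
    by rewrite -!S_mul hC mul0l mul0r.
  have : S (delta_mx p0 q *m (A *m C *m A) *m delta_mx r s0) = 0.
    by move: e; rewrite !mulmxA.
  rewrite delta_mid S_scale S_delta => /eqP; rewrite scaler_eq0 (negbTE hne) orbF.
  by move/eqP.
have -> : C = invmx A *m (A *m C *m A) *m invmx A.
  by rewrite !mulmxA mulVmx // mul1mx mulmxK.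
by rewrite hB mulmx0 mul0mx.
Qed.

Lemma S_inj M N : S M = S N -> M = N.
Proof.
move=> h; apply/eqP; rewrite -subr_eq0; apply/eqP; apply: indep.
by rewrite SB h subrr.
Qed.

End Alg.

Theorem theorem31 (R : realType) (m : nat) (A : 'M[Cplx R]_m)
  (hA : A \in unitmx)
  (X : lmodType (Cplx R)) (mul : X -> X -> X) (hX : is_assoc_algebra mul)
  (x : 'I_m -> 'I_m -> X)
  (hspan : forall v : X, exists c : 'I_m -> 'I_m -> Cplx R,
             v = \sum_(i < m) \sum_(j < m) c i j *: x i j)
  (hrel : forall i j k l : 'I_m, mul (x i j) (x k l) = A j k *: x i l) :
  (forall v : X, v = 0)
  \/
  [/\ exists v : X, v != 0,
      exists f : X -> 'M[Cplx R]_m, algebra_iso_to_matrix mul f,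
      forall c : 'I_m -> 'I_m -> Cplx R,
        \sum_(i < m) \sum_(j < m) c i j *: x i j = 0 -> forall i j, c i j = 0,
      forall i j : 'I_m, x i j != 0
    & forall v : X,
        mul (\sum_(i < m) \sum_(j < m) (invmx A) i j *: x i j) v = v /\
        mul v (\sum_(i < m) \sum_(j < m) (invmx A) i j *: x i j) = v].
Proof.
have hM : forall v : X, exists M : 'M[Cplx R]_m, v == S _ _ _ x M.
  move=> v; have [c ->] := hspan v; exists (\matrix_(i, j) c i j).
  by rewrite S_fun.
case: (boolP [exists p, exists s, x p s != 0]) => [/existsP [p /existsP [s hps]] | hall].
  right.
  pose coef v := xchoose (hM v).
  have coefP : forall v, v = S _ _ _ x (coef v) by move=> v; exact: (eqP (xchooseP (hM v))).
  have Sinj := @S_inj _ _ _ _ _ hX _ hrel hA _ _ hps.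
  have indp := @indep _ _ _ _ _ hX _ hrel hA _ _ hps.
  split.
  - by exists (x p s).
  - exists (fun v => coef v *m A); split.
    + move=> a u v.
      have -> : coef (a *: u + v) = a *: coef u + coef v.
        by apply: Sinj; rewrite S_lin -!coefP.
      by rewrite mulmxDl scalemxAl.
    + move=> u v.
      have -> : coef (mul u v) = coef u *m A *m coef v.
        by apply: Sinj; rewrite -(@S_mul _ _ _ _ _ hX _ hrel) -!coefP.
      by rewrite !mulmxA.
    + exists (fun M => S _ _ _ x (M *m invmx A)).
      * by move=> v /=; rewrite mulmxK // -coefP.
      * move=> M /=.
        have -> : coef (S _ _ _ x (M *m invmx A)) = M *m invmx A.
          by apply: Sinj; rewrite -coefP.
        by rewrite mulmxKV.
  - move=> c hc i j.
    have := indp (\matrix_(i, j) c i j); rewrite S_fun => /(_ hc) /matrixP /(_ i j).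
    by rewrite !mxE.
  - move=> i j; apply/eqP => h.
    have := indp (delta_mx i j); rewrite S_delta => /(_ h) /matrixP /(_ i j).
    by rewrite !mxE !eqxx /= => /eqP; rewrite oner_eq0.
  - move=> v; have [M /eqP ->] := hM v.
    by rewrite -/(S _ _ _ x (invmx A)) (@unit_l _ _ _ _ _ hX _ hrel hA) (@unit_r _ _ _ _ _ hX _ hrel hA).
left => v; have [c ->] := hspan v.
rewrite big1 // => i _; rewrite big1 // => j _.
move/existsPn: hall => /(_ i) /existsPn /(_ j) /negPn /eqP ->.
by rewrite scaler0.
Qed.
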